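(* Let $t$ be a positive integer, let $n$ be sufficiently large compared to $t$, and let $G$ be an $n$-vertex graph with $e(G)\ge 5t^{3/2}n^{3/2}$. Then $G$ contains a non-empty $t^2$-rich collection of paths of length $2t-2$.
   Context: A path of length $2t-2$ has $2t-1$ vertices. For $\alpha>0$ and $k\in\mathbb{N}$, a collection $\mathcal{P}$ of labelled paths $x_1x_2\cdots x_k$ (distinct vertices) in $G$ is $\alpha$-rich if for every $x_1\cdots x_k\in\mathcal{P}$ and every $2\le i\le k-1$ there exist at least $\alpha$ distinct vertices $x_i'$ with $x_1\cdots x_{i-1}x_i'x_{i+1}\cdots x_k\in\mathcal{P}$. *)

(* Defs.v *)
From mathcomp Require Import all_boot.
Set Implicit Arguments. Unset Strict Implicit. Unset Printing Implicit Defensive.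

(* Simple graph: vertex set a finType T, adjacency e : rel T, assumed
   symmetric and irreflexive in the theorem. *)

(* Number of edges e(G): ordered adjacent pairs counted once per unordered pair. *)
Definition num_edges (T : finType) (e : rel T) : nat :=
  #|[set p : T * T | e p.1 p.2]| %/ 2.

(* A labelled path x_0 x_1 ... x_{k-1} (k vertices) as a function 'I_k -> T:
   distinct vertices, consecutive ones adjacent. *)
Definition is_gpath (T : finType) (e : rel T) (k : nat) (p : {ffun 'I_k -> T}) : bool :=
  injectiveb p &&
  [forall i : 'I_k, forall j : 'I_k, (nat_of_ord j == (nat_of_ord i).+1) ==> e (p i) (p j)].

Definition replace_at (T : finType) (k : nat) (p : {ffun 'I_k -> T}) (i : 'I_k) (v : T)
  : {ffun 'I_k -> T} := [ffun j => if j == i then v else p j].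

(* alpha-rich: for every path in P and every interior position (1-indexed
   2 <= i <= k-1, i.e. 0-indexed 1 <= i <= k-2) there are at least alpha
   distinct vertices v such that replacing x_i by v stays in P. *)
Definition rich (T : finType) (k : nat) (alpha : nat) (P : {set {ffun 'I_k -> T}}) : Prop :=
  forall p, p \in P -> forall i : 'I_k, 1 <= nat_of_ord i -> (nat_of_ord i).+2 <= k ->
    alpha <= #|[set v : T | replace_at p i v \in P]|.

(* Main.v *)
Require Import Defs.
From mathcomp Require Import all_boot all_order all_algebra.
From mathcomp Require Import ring lra zify.
Set Implicit Arguments. Unset Strict Implicit. Unset Printing Implicit Defensive.
Import Order.TTheory GRing.Theory Num.Theory.

Open Scope ring_scope.
Lemma sum_tuple_cons (T : finType) l (F : l.+1.-tuple T -> rat) :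
  \sum_(s : l.+1.-tuple T) F s = \sum_(x : T) \sum_(s : l.-tuple T) F [tuple of x :: s].
Proof.
rewrite pair_bigA /=.
rewrite (reindex (fun p : T * l.-tuple T => [tuple of p.1 :: p.2])) /=; last first.
  exists (fun s : l.+1.-tuple T => (thead s, [tuple of behead s])) => [[x s] _|s _] /=.
    by congr pair; apply: val_inj.
  by rewrite [RHS]tuple_eta.
by apply: eq_bigr => -[x s].
Qed.

Definition CF (T : Type) (x0 : T) (Phi : nat -> T -> rat) (Psi : nat -> T -> T -> rat)
  (o : nat) (s : seq T) : rat :=
  (\prod_(0 <= j < size s) Phi (o + j)%N (nth x0 s j)) *
  \prod_(0 <= j < (size s).-1) Psi (o + j)%N (nth x0 s j) (nth x0 s j.+1).

Fixpoint V (T : finType) (Phi : nat -> T -> rat) (Psi : nat -> T -> T -> rat)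
  (o l : nat) (x : T) : rat :=
  match l with
  | 0 => Phi o x
  | l'.+1 => Phi o x * \sum_(y : T) Psi o x y * V Phi Psi o.+1 l' y
  end.

Lemma CF1 (T : Type) x0 Phi Psi o (x : T) : CF x0 Phi Psi o [:: x] = Phi o x.
Proof. by rewrite /CF /= !big_nat1 big_geq // mulr1 addn0. Qed.

Lemma CF2 (T : Type) x0 Phi Psi o (x y : T) s :
  CF x0 Phi Psi o [:: x, y & s] = Phi o x * Psi o x y * CF x0 Phi Psi o.+1 (y :: s).
Proof.
rewrite /CF /= big_nat_recl // [in X in _ * X]big_nat_recl //= !addn0.
rewrite -!mulrA; congr (_ * _); rewrite mulrCA; congr (_ * _).
congr (_ * _); apply: eq_bigr => j _; by rewrite addnS addSn.
Qed.

Lemma CF_sum (T : finType) x0 l : forall Phi Psi o (x : T),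
  \sum_(s : l.-tuple T) CF x0 Phi Psi o (x :: s) = V Phi Psi o l x.
Proof.
elim: l => [|l IH] Phi Psi o x /=.
  rewrite (eq_bigr (fun _ => Phi o x)); last by move=> s _; rewrite tuple0 CF1.
  by rewrite sumr_const card_tuple expn0.
rewrite sum_tuple_cons mulr_sumr; apply: eq_bigr => y _.
rewrite -IH mulr_sumr mulr_sumr; apply: eq_bigr => s _ /=.
by rewrite CF2 mulrA.
Qed.

Close Scope ring_scope.
Open Scope ring_scope.
Definition deg (T : finType) (S : {set T}) (e : rel T) (x : T) : nat :=
  #|[set y in S | e x y]|.

Definition phi (T : finType) (S : {set T}) (e : rel T) (l : nat) (j : nat) (x : T) : rat :=
  if x \in S then (if (0 < j)%N && (j < l)%N then ((deg S e x)%:R)^-1 else 1) else 0.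

Definition psi (T : finType) (e : rel T) (j : nat) (x y : T) : rat := (e x y)%:R.

Lemma sum_adj (T : finType) (S : {set T}) (e : rel T) j x :
  \sum_y psi e j x y * (y \in S)%:R = (deg S e x)%:R.
Proof.
rewrite /deg -sum1_card natr_sum [RHS]big_mkcond /=; apply: eq_bigr => y _.
by rewrite /psi inE; case: (y \in S); case: (e x y); rewrite ?mulr1 ?mulr0.
Qed.

Lemma sum_adj_le (T : finType) (S : {set T}) (e : rel T) j x (f : T -> rat) c :
  (forall y, 0 <= f y) -> (forall y, f y <= c * (y \in S)%:R) ->
  \sum_y psi e j x y * f y <= c * (deg S e x)%:R.
Proof.
move=> f0 fc; rewrite -(sum_adj S e j) mulr_sumr; apply: ler_sum => y _.
rewrite mulrCA; apply: ler_wpM2l; first by rewrite /psi ler0n.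
exact: fc.
Qed.

Lemma phi_ge0 (T : finType) (S : {set T}) (e : rel T) l j x : 0 <= phi S e l j x.
Proof. by rewrite /phi; case: (x \in S) => //; case: ifP => // _; rewrite invr_ge0 ler0n. Qed.

Lemma psi_ge0 (T : finType) (e : rel T) j x y : 0 <= psi e j x y.
Proof. by rewrite /psi ler0n. Qed.

Lemma V_ge0 (T : finType) Phi Psi : (forall j x, 0 <= Phi j x) -> (forall j x y, 0 <= Psi j x y) ->
  forall l o (x : T), 0 <= V Phi Psi o l x.
Proof.
move=> H1 H2; elim=> [|l IH] o x /=; first exact: H1.
apply: mulr_ge0 => //; apply: sumr_ge0 => y _; exact: mulr_ge0.
Qed.

Lemma B1gen (T : finType) (S : {set T}) (e : rel T) (D : nat) l Phi Psi m :
  (0 < D)%N -> (forall x, x \in S -> (D <= deg S e x)%N) ->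
  (forall j x, (m <= j)%N -> Phi j x = phi S e l j x) ->
  (forall j x y, (m <= j)%N -> Psi j x y = psi e j x y) ->
  forall lr o x, (1 <= o)%N -> (m <= o)%N -> (o + lr = l)%N ->
  V Phi Psi o lr x = (x \in S)%:R.
Proof.
move=> D0 hD HPhi HPsi; elim=> [|lr IH] o x o1 mo ol /=.
  rewrite HPhi // /phi; case: (x \in S) => //; rewrite addn0 in ol.
  by rewrite ol ltnn andbF.
rewrite HPhi //.
rewrite (eq_bigr (fun y => psi e o x y * (y \in S)%:R)); last first.
  by move=> y _; rewrite HPsi // IH // ?(leq_trans mo) // addSnnS.
rewrite sum_adj /phi; case xS: (x \in S); last by rewrite mul0r.
have -> : ((0 < o)%N && (o < l)%N) by apply/andP; split; lia.
rewrite mulVf // pnatr_eq0 -lt0n; exact: leq_trans D0 (hD x xS).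
Qed.

Close Scope ring_scope.
Open Scope ring_scope.
Lemma deg_pos (T : finType) (S : {set T}) (e : rel T) (D : nat) x :
  (0 < D)%N -> (forall x, x \in S -> (D <= deg S e x)%N) -> x \in S ->
  (deg S e x)%:R != 0 :> rat.
Proof. by move=> D0 hD xS; rewrite pnatr_eq0 -lt0n (leq_trans D0 (hD x xS)). Qed.

Lemma phi_int (T : finType) (S : {set T}) (e : rel T) (D : nat) l j x :
  (0 < D)%N -> (forall x, x \in S -> (D <= deg S e x)%N) -> (0 < j)%N -> (j < l)%N ->
  phi S e l j x * (deg S e x)%:R = (x \in S)%:R.
Proof.
move=> D0 hD j0 jl; rewrite /phi j0 jl /=; case xS: (x \in S); last by rewrite mul0r.
by rewrite mulVf // (deg_pos D0 hD xS).
Qed.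

Lemma cdeg (T : finType) (S : {set T}) (e : rel T) (D : nat) x :
  (0 < D)%N -> (forall x, x \in S -> (D <= deg S e x)%N) -> x \in S ->
  1 <= (D%:R)^-1 * (deg S e x)%:R :> rat.
Proof.
move=> D0 hD xS; have hD' : (D%:R <= (deg S e x)%:R :> rat) by rewrite ler_nat hD.
have Dp : (0 < D%:R :> rat) by rewrite ltr0n.
by rewrite ler_pdivlMl // mulr1.
Qed.

Lemma phi_int_le (T : finType) (S : {set T}) (e : rel T) (D : nat) l j x :
  (0 < D)%N -> (forall x, x \in S -> (D <= deg S e x)%N) -> (0 < j)%N -> (j < l)%N ->
  phi S e l j x <= (D%:R)^-1 * (x \in S)%:R.
Proof.
move=> D0 hD j0 jl; rewrite /phi j0 jl /=; case xS: (x \in S); last by rewrite mulr0.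
rewrite mulr1 lef_pV2 ?ler_nat ?hD // posrE ltr0n //.
exact: leq_trans D0 (hD x xS).
Qed.

Lemma sumS (T : finType) (S : {set T}) : \sum_y (y \in S)%:R = #|S|%:R :> rat.
Proof. rewrite -sum1_card natr_sum [RHS]big_mkcond /=; apply: eq_bigr => y _; by case: (y \in S). Qed.

Definition Phia (T : finType) (S : {set T}) (e : rel T) (l : nat) (a : T) j x : rat :=
  phi S e l j x * (if (j == 0)%N || (j == l) then (x == a)%:R else 1).

Lemma Phia_ge0 (T : finType) (S : {set T}) (e : rel T) (l : nat) (a : T) j x :
  0 <= Phia S e l a j x.
Proof. rewrite /Phia; apply: mulr_ge0; first exact: phi_ge0. by case: ifP. Qed.

Lemma B2step (T : finType) (S : {set T}) (e : rel T) (D : nat) l (a : T) :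
  (0 < D)%N -> (forall x, x \in S -> (D <= deg S e x)%N) ->
  forall lr o x, (1 <= o)%N -> (1 <= lr)%N -> (o + lr = l)%N ->
  V (Phia S e l a) (psi e) o lr x <= (D%:R)^-1 * (x \in S)%:R.
Proof.
move=> D0 hD; elim=> [|lr IH] o x o1 lr1 ol //.
have Hin : (0 < o)%N && (o < l)%N by apply/andP; split; lia.
have HP : Phia S e l a o x = phi S e l o x.
  rewrite /Phia; have -> : ((o == 0)%N || (o == l)) = false by apply/negbTE; lia.
  by rewrite mulr1.
case: lr IH lr1 ol => [|lr] IH _ ol /=; rewrite HP.
  have Hle := phi_int_le (l:=l) (j:=o) x D0 hD (proj1 (andP Hin)) (proj2 (andP Hin)).
  apply: le_trans Hle.
  rewrite -[X in _ <= X]mulr1; apply: ler_wpM2l; first exact: phi_ge0.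
  rewrite (bigD1 a) //= big1 ?addr0.
    rewrite /psi /Phia /phi; have -> : (o.+1 == l) by apply/eqP; lia.
    rewrite orbT eqxx; case: (a \in S); case: (e x a); rewrite /= ?mul0r ?mulr0 ?mulr1 //.
    have -> : (o.+1 < l)%N = false by apply/negbTE; lia.
    by rewrite mulr1.
  move=> y /negbTE ya; rewrite /Phia; have -> : (o.+1 == l) by apply/eqP; lia.
  by rewrite orbT ya mulr0 mulr0.
apply: le_trans (_ : phi S e l o x * ((D%:R)^-1 * (deg S e x)%:R) <= _).
  apply: ler_wpM2l; first exact: phi_ge0.
  apply: sum_adj_le => y.
    exact: (V_ge0 (@Phia_ge0 T S e l a) (@psi_ge0 T e) lr.+1 o.+1 y).
  by apply: (IH o.+1 y); lia.
rewrite mulrCA (phi_int _ D0 hD) //; by case/andP: Hin.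
Qed.

Lemma phi0 (T : finType) (S : {set T}) (e : rel T) l x : phi S e l 0 x = (x \in S)%:R.
Proof. by rewrite /phi; case: (x \in S). Qed.

Definition Esum (T : finType) (S : {set T}) (e : rel T) : rat :=
  \sum_x (x \in S)%:R * (deg S e x)%:R.

Lemma B2total (T : finType) (S : {set T}) (e : rel T) (D : nat) l (a : T) :
  (0 < D)%N -> (forall x, x \in S -> (D <= deg S e x)%N) -> (1 < l)%N ->
  \sum_x V (Phia S e l a) (psi e) 0 l x <= (D%:R)^-1 * ((a \in S)%:R * (deg S e a)%:R).
Proof.
move=> D0 hD; case: l => [|l] // l1 /=.
apply: le_trans (_ : \sum_x Phia S e l.+1 a 0 x * ((D%:R)^-1 * (deg S e x)%:R) <= _).
  apply: ler_sum => x _; apply: ler_wpM2l; first exact: Phia_ge0.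
  apply: sum_adj_le => y.
    exact: (V_ge0 (@Phia_ge0 T S e l.+1 a) (@psi_ge0 T e)).
  by apply: B2step => //; lia.
rewrite (bigD1 a) //= big1 ?addr0.
  by rewrite /Phia phi0 /= eqxx mulr1 mulrCA.
by move=> x /negbTE xa; rewrite /Phia eq_refl /= xa mulr0 mul0r.
Qed.

Definition Phii (T : finType) (S : {set T}) (e : rel T) (l : nat) (x0 : T) (i : nat) j x : rat :=
  if j == i then (x == x0)%:R else phi S e l j x.

Definition Psii (T : finType) (e : rel T) (i : nat) j (x y : T) : rat :=
  if (j == i.-1) || (j == i) then 1 else psi e j x y.

Lemma Phii_ge0 (T : finType) (S : {set T}) (e : rel T) l x0 i j x : 0 <= Phii S e l x0 i j x.
Proof. rewrite /Phii; case: ifP => _; [exact: ler0n | exact: phi_ge0]. Qed.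

Lemma Psii_ge0 (T : finType) (e : rel T) i j x y : 0 <= Psii e i j x y.
Proof. rewrite /Psii; case: ifP => _; [exact: ler01 | exact: psi_ge0]. Qed.

Lemma B3mid (T : finType) (S : {set T}) (e : rel T) (D : nat) l x0 i :
  (0 < D)%N -> (forall x, x \in S -> (D <= deg S e x)%N) -> (1 <= i)%N -> (i < l)%N ->
  forall lr x, (i + lr = l)%N ->
  V (Phii S e l x0 i) (Psii e i) i lr x = (x == x0)%:R * #|S|%:R.
Proof.
move=> D0 hD i1 il [|lr] x ol; first lia.
rewrite /= {1}/Phii eqxx; congr (_ * _); rewrite -sumS; apply: eq_bigr => y _.
rewrite /Psii eqxx orbT mul1r.
apply: (B1gen D0 hD (m := i.+1)) => //; try lia.
- move=> j z ij; rewrite /Phii ifF; [congr phi; lia | apply/negbTE; lia].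
- by move=> j z w ij; rewrite ?/Psii ifF //; apply/negbTE; lia.
Qed.

Lemma B3low (T : finType) (S : {set T}) (e : rel T) (D : nat) l x0 i :
  (0 < D)%N -> (forall x, x \in S -> (D <= deg S e x)%N) -> (1 <= i)%N -> (i < l)%N ->
  forall lr o x, (1 <= o)%N -> (o < i)%N -> (o + lr = l)%N ->
  V (Phii S e l x0 i) (Psii e i) o lr x <= (D%:R)^-1 * #|S|%:R * (x \in S)%:R.
Proof.
move=> D0 hD i1 il; elim=> [|lr IH] o x o1 oi ol; first lia.
have Hin : (0 < o)%N && (o < l)%N by apply/andP; split; lia.
rewrite /= {1}/Phii; have -> : (o == i) = false by apply/negbTE; lia.
have [oi'|/eqP oi'] := eqVneq o.+1 i.
  rewrite (eq_bigr (fun y => (y == x0)%:R * #|S|%:R)); last first.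
    move=> y _; have -> : Psii e i o x y = 1 by rewrite /Psii (_ : o == i.-1) //; apply/eqP; lia.
    rewrite mul1r -oi'; apply: (@B3mid T S e D l x0 o.+1 D0 hD); lia.
  rewrite -mulr_suml /= (bigD1 x0) //= big1 ?addr0 ?eqxx ?mul1r.
    have Hle := phi_int_le (l:=l) (j:=o) x D0 hD (proj1 (andP Hin)) (proj2 (andP Hin)).
    rewrite mulrAC; apply: ler_wpM2r => //; exact: ler0n.
  by move=> y /negbTE ->.
apply: le_trans (_ : phi S e l o x * ((D%:R)^-1 * #|S|%:R * (deg S e x)%:R) <= _).
  apply: ler_wpM2l; first exact: phi_ge0.
  rewrite (eq_bigr (fun y => psi e o x y * V (Phii S e l x0 i) (Psii e i) o.+1 lr y)); last first.
    move=> y _; rewrite /Psii; have -> : ((o == i.-1) || (o == i)) = false by apply/negbTE; lia.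
    done.
  apply: sum_adj_le => y.
    exact: (V_ge0 (@Phii_ge0 T S e l x0 i) (@Psii_ge0 T e i)).
  by apply: IH => //; lia.
rewrite mulrCA (phi_int _ D0 hD) //; by case/andP: Hin.
Qed.

Lemma B3total (T : finType) (S : {set T}) (e : rel T) (D : nat) l x0 i :
  (0 < D)%N -> (forall x, x \in S -> (D <= deg S e x)%N) -> (1 <= i)%N -> (i < l)%N ->
  \sum_x V (Phii S e l x0 i) (Psii e i) 0 l x <= (D%:R)^-1 * #|S|%:R * Esum S e.
Proof.
move=> D0 hD i1 il; rewrite /Esum mulr_sumr; apply: ler_sum => x _.
case: l il => [|l] il //=.
rewrite {1}/Phii; have -> : (0 == i) = false by apply/negbTE; lia.
rewrite phi0.
have [i1'|/eqP i1'] := eqVneq i 1%N.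
  rewrite (eq_bigr (fun y => (y == x0)%:R * #|S|%:R)); last first.
    move=> y _; have -> : Psii e i 0 x y = 1 by rewrite /Psii i1'.
    rewrite mul1r -{1}i1'; apply: (@B3mid T S e D l.+1 x0 i D0 hD) => //; lia.
  rewrite -mulr_suml /= (bigD1 x0) //= big1 ?addr0 ?eqxx ?mul1r; last by move=> y /negbTE ->.
  case xS: (x \in S); last by rewrite !mul0r mulr0.
  rewrite /= !mul1r mulrAC -[X in X <= _]mul1r; apply: ler_wpM2r; [exact: ler0n | exact: cdeg].
apply: le_trans (_ : (x \in S)%:R * ((D%:R)^-1 * #|S|%:R * (deg S e x)%:R) <= _); last by rewrite mulrCA.
apply: ler_wpM2l; first exact: ler0n.
rewrite (eq_bigr (fun y => psi e 0 x y * V (Phii S e l.+1 x0 i) (Psii e i) 1 l y)); last first.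
  move=> y _; rewrite /Psii; have -> : ((0 == i.-1)%N || (0 == i)) = false by apply/negbTE; lia.
  done.
apply: sum_adj_le => y.
  exact: (V_ge0 (@Phii_ge0 T S e l.+1 x0 i) (@Psii_ge0 T e i)).
by apply: B3low => //; lia.
Qed.

Close Scope ring_scope.
Open Scope ring_scope.
Definition trep (T : Type) (k : nat) (s : k.-tuple T) (i : 'I_k) (v : T) : k.-tuple T :=
  [tuple (if j == i then v else tnth s j) | j < k].

Lemma tnth_trep (T : Type) k (s : k.-tuple T) i v j :
  tnth (trep s i v) j = if j == i then v else tnth s j.
Proof. by rewrite /trep tnth_mktuple. Qed.

Lemma trep_id (T : Type) k (s : k.-tuple T) i : trep s i (tnth s i) = s.
Proof. by apply: eq_from_tnth => j; rewrite tnth_trep; case: eqP => // ->. Qed.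

Lemma trep_trep (T : Type) k (s : k.-tuple T) i v v' : trep (trep s i v) i v' = trep s i v'.
Proof. by apply: eq_from_tnth => j; rewrite !tnth_trep; case: eqP. Qed.

Definition inner k (i : 'I_k) := (1 <= i)%N && (i.+2 <= k)%N.

Definition trich (T : finType) k (beta : nat) (Q : {set k.-tuple T}) :=
  forall s, s \in Q -> forall i : 'I_k, inner i -> (beta <= #|[set v | trep s i v \in Q]|)%N.

Definition mu (T : finType) k (w : k.-tuple T -> rat) (Q : {set k.-tuple T}) :=
  \sum_(s in Q) w s.

Definition Bud (T : finType) k (x0 : T) (cB : rat) (rest : 'I_k -> k.-tuple T -> rat)
  (Q : {set k.-tuple T}) :=
  \sum_(i : 'I_k | inner i) cB * \sum_(c in [set trep s i x0 | s in Q]) rest i c.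

Lemma sum_subset_le (I : finType) (A B : {pred I}) (F : I -> rat) :
  (forall i, i \in A -> i \in B) -> (forall i, i \in B -> 0 <= F i) ->
  \sum_(i in A) F i <= \sum_(i in B) F i.
Proof.
move=> AB F0; rewrite [X in _ <= X](bigID (mem A)) /=.
rewrite [X in _ <= X + _](eq_bigl (mem A)); last by move=> i; rewrite [RHS]/= andbC; case iA: (i \in A) => //=; apply: AB.
rewrite -[X in X <= _]addr0 lerD //; apply: sumr_ge0 => i /andP [iB _]; exact: F0.
Qed.

Lemma deletion (T : finType) k (x0 : T) (beta : nat) (c0 : rat)
  (w : k.-tuple T -> rat) (rest : 'I_k -> k.-tuple T -> rat) (phiI : 'I_k -> T -> rat) :
  0 <= c0 ->
  (forall i v, phiI i v <= c0) ->
  (forall i s, 0 <= rest i s) ->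
  (forall i s v, inner i -> w (trep s i v) = phiI i v * rest i s) ->
  (forall i s v, rest i (trep s i v) = rest i s) ->
  forall n (Q : {set k.-tuple T}), #|Q| = n ->
  Bud x0 ((beta.-1)%:R * c0) rest Q < mu w Q ->
  exists Q' : {set k.-tuple T}, [/\ Q' \subset Q, Q' != set0 & trich beta Q'].
Proof.
move=> c00 phic rest0 hw hrest.
have cB0 : 0 <= (beta.-1)%:R * c0 by apply: mulr_ge0 => //; exact: ler0n.
have sumK0 : forall (i : 'I_k) (Q : {set k.-tuple T}), 0 <= \sum_(c in [set trep s i x0 | s in Q]) rest i c.
  by move=> i Q; apply: sumr_ge0 => c _; exact: rest0.
have Bud0 : forall Q, 0 <= Bud x0 ((beta.-1)%:R * c0) rest Q.
  by move=> Q; apply: sumr_ge0 => i _; apply: mulr_ge0.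
elim/ltn_ind => n IH Q nQ hQ.
case: (boolP [forall s in Q, forall i : 'I_k, inner i ==> (beta <= #|[set v | trep s i v \in Q]|)%N]).
  move/forall_inP => rich; exists Q; split => //.
    apply/set0Pn; case: (set_0Vmem Q) => [Q0|[s sQ]]; last by exists s.
    by move: hQ; rewrite Q0 /mu big_set0 ltNge Bud0.
  by move=> s sQ i ii; move/forallP: (rich s sQ) => /(_ i); rewrite ii.
move/forall_inPn => [s sQ]; move/forallPn => [i]; rewrite negb_imply => /andP [ii small].
rewrite -ltnNge in small.
set C := [set u in Q | trep u i x0 == trep s i x0].
set Q' := Q :\: C.
have sC : s \in C by rewrite inE sQ eqxx.
have ltQ : (#|Q'| < n)%N.
  rewrite -nQ; apply: proper_card; apply/properP; split; first exact: subsetDl.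
  by exists s => //; rewrite inE sC.
have [Q'' [sub ne rich]] : exists Q'' : {set k.-tuple T}, [/\ Q'' \subset Q', Q'' != set0 & trich beta Q''].
  apply: (IH _ ltQ Q' erefl).
  have Cu : forall u, u \in C -> u = trep s i (tnth u i).
    move=> u; rewrite inE => /andP [_ /eqP H]; apply: eq_from_tnth => j.
    rewrite tnth_trep; case: eqP => [->//|/eqP ji].
    have := congr1 (fun t => tnth t j) H; rewrite /= !tnth_trep.
    by rewrite (negbTE ji).
  have muC : mu w C <= (beta.-1)%:R * c0 * rest i s.
    have cardC : (#|C| <= beta.-1)%N.
      have -> : C = [set trep s i v | v in [set v | trep s i v \in Q]].
        apply/setP => u; apply/idP/imsetP.
          move=> uC; exists (tnth u i); last exact: Cu.
          by rewrite inE -Cu // ; move: uC; rewrite inE => /andP [].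
        move=> [v]; rewrite inE => vQ ->; rewrite inE vQ trep_trep eqxx.
        by [].
      apply: leq_trans (leq_imset_card _ _) _; lia.
    rewrite /mu; apply: le_trans (_ : \sum_(u in C) c0 * rest i s <= _).
      apply: ler_sum => u uC; rewrite (Cu u uC) hw //.
      by apply: ler_wpM2r => //.
    rewrite sumr_const -[_ *+ #|C|]mulr_natl mulrA; apply: ler_wpM2r; first exact: rest0.
    by apply: ler_wpM2r => //; rewrite ler_nat.
  have muQ : mu w Q = mu w Q' + mu w C.
    rewrite /mu (big_setID C) /= addrC; congr (_ + _).
      apply: eq_bigl => u; rewrite inE; case uC: (u \in C); last by rewrite andbF.
      by move: uC; rewrite inE => /andP [->].
  have BQ : Bud x0 ((beta.-1)%:R * c0) rest Q' + (beta.-1)%:R * c0 * rest i s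
            <= Bud x0 ((beta.-1)%:R * c0) rest Q.
    rewrite /Bud (bigD1 i) //= [X in _ <= X](bigD1 i) //= addrAC; apply: lerD; last first.
      apply: ler_sum => j _; apply: ler_wpM2l => //.
      apply: sum_subset_le => [c|c _]; last exact: rest0.
      case/imsetP => u; rewrite inE => /andP [_ uQ] ->; apply/imsetP; exists u => //.
    rewrite -mulrDr; apply: ler_wpM2l => //.
    have kS : trep s i x0 \in [set trep s i x0 | s in Q] by apply/imsetP; exists s.
    rewrite [X in _ <= X](bigD1 (trep s i x0)) //= hrest addrC lerD //.
    apply: sum_subset_le => [c|c _]; last exact: rest0.
    case/imsetP => u uQ' ->; move: uQ'; rewrite /Q' /C !inE => /andP [H uQ].
    rewrite unfold_in /= (imset_f (fun t => trep t i x0) uQ) /=; by move: H; rewrite uQ.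
  move: hQ; rewrite muQ; move: BQ muC; lra.
exists Q''; split => //; apply: subset_trans sub _; exact: subsetDl.
Qed.

Close Scope ring_scope.
Open Scope ring_scope.
Lemma prod_nat_neq0 (F : nat -> rat) n j :
  \prod_(0 <= i < n) F i != 0 -> (j < n)%N -> F j != 0.
Proof.
rewrite prodf_seq_neq0 => /allP /(_ j) H jn; apply: H.
by rewrite mem_iota; apply/andP; split; lia.
Qed.

Lemma prod_pick (F : nat -> rat) n i : (i < n)%N ->
  \prod_(0 <= j < n) F j = F i * \prod_(0 <= j < n) (if j == i then 1 else F j).
Proof.
move=> ilt; rewrite !big_mkord (bigD1 (Ordinal ilt)) //= [X in _ = _ * X](bigD1 (Ordinal ilt)) //=.
rewrite eqxx mul1r; congr (_ * _); apply: eq_bigr => j /negbTE ji.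
by rewrite -val_eqE /= in ji; rewrite ji.
Qed.

Lemma nth_trep (T : Type) (x0 : T) k (s : k.-tuple T) (i : 'I_k) v j :
  nth x0 (trep s i v) j = if j == i then v else nth x0 s j.
Proof.
case: (ltnP j k) => jk.
  have -> : nth x0 (trep s i v) j = tnth (trep s i v) (Ordinal jk) by rewrite (tnth_nth x0).
  rewrite tnth_trep (tnth_nth x0) /=.
  by have -> : (Ordinal jk == i) = (j == i :> nat) by rewrite -val_eqE.
rewrite !nth_default ?size_tuple //.
have -> : (j == i :> nat) = false by apply/negbTE; have := ltn_ord i; lia.
done.
Qed.

Definition wt (T : finType) (S : {set T}) (e : rel T) (x0 : T) l (s : l.+1.-tuple T) : rat :=
  \prod_(0 <= j < l.+1) phi S e l j (nth x0 s j).

Definition rst (T : finType) (S : {set T}) (e : rel T) (x0 : T) l (i : 'I_l.+1) (s : l.+1.-tuple T) : rat :=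
  \prod_(0 <= j < l.+1) (if j == i then 1 else phi S e l j (nth x0 s j)).

Definition adjp (T : finType) (e : rel T) (x0 : T) l (s : l.+1.-tuple T) : rat :=
  \prod_(0 <= j < l) psi e j (nth x0 s j) (nth x0 s j.+1).

Lemma CF_split (T : finType) (S : {set T}) (e : rel T) (x0 : T) l (s : l.+1.-tuple T) :
  CF x0 (phi S e l) (psi e) 0 s = wt S e x0 s * adjp e x0 s.
Proof. by rewrite /CF size_tuple /wt /adjp. Qed.

Lemma adjp_walk (T : finType) (S : {set T}) (e : rel T) (x0 : T) l (s : l.+1.-tuple T) :
  CF x0 (phi S e l) (psi e) 0 s != 0 ->
  (forall j, (j < l)%N -> e (nth x0 s j) (nth x0 s j.+1)) /\ adjp e x0 s = 1.
Proof.
rewrite CF_split mulf_eq0 negb_or => /andP [_ H].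
have He : forall j, (j < l)%N -> e (nth x0 s j) (nth x0 s j.+1).
  move=> j jl; have := prod_nat_neq0 H jl; rewrite /psi.
  by case: (e _ _); rewrite ?eqxx.
split => //; rewrite /adjp big_nat big1 // => j /andP [_ jl].
by rewrite /psi He.
Qed.

Lemma wt_trep (T : finType) (S : {set T}) (e : rel T) (x0 : T) l (s : l.+1.-tuple T) i v :
  wt S e x0 (trep s i v) = phi S e l i v * rst S e x0 i s.
Proof.
rewrite /wt (prod_pick _ (ltn_ord i)) nth_trep eqxx; congr (_ * _).
rewrite /rst; apply: eq_bigr => j _; rewrite nth_trep; by case: eqP.
Qed.

Lemma rst_trep (T : finType) (S : {set T}) (e : rel T) (x0 : T) l (s : l.+1.-tuple T) i v :
  rst S e x0 i (trep s i v) = rst S e x0 i s.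
Proof. rewrite /rst; apply: eq_bigr => j _; rewrite nth_trep; by case: eqP. Qed.

Lemma rst_ge0 (T : finType) (S : {set T}) (e : rel T) (x0 : T) l i (s : l.+1.-tuple T) :
  0 <= rst S e x0 i s.
Proof. apply: prodr_ge0 => j _; case: ifP => _ //; exact: phi_ge0. Qed.

Lemma wt_ge0 (T : finType) (S : {set T}) (e : rel T) (x0 : T) l (s : l.+1.-tuple T) :
  0 <= wt S e x0 s.
Proof. apply: prodr_ge0 => j _; exact: phi_ge0. Qed.

Lemma adjp_ge0 (T : finType) (e : rel T) (x0 : T) l (s : l.+1.-tuple T) :
  0 <= adjp e x0 s.
Proof. apply: prodr_ge0 => j _; exact: psi_ge0. Qed.

Lemma CF_ge0 (T : finType) (S : {set T}) (e : rel T) (x0 : T) l (s : l.+1.-tuple T) :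
  0 <= CF x0 (phi S e l) (psi e) 0 s.
Proof. rewrite CF_split; apply: mulr_ge0; [exact: wt_ge0 | exact: adjp_ge0]. Qed.

Lemma CF_total (T : finType) Phi Psi (x0 : T) l :
  \sum_(s : l.+1.-tuple T) CF x0 Phi Psi 0 s = \sum_x V Phi Psi 0 l x.
Proof. by rewrite sum_tuple_cons; apply: eq_bigr => x _; rewrite CF_sum. Qed.

Lemma V_total (T : finType) (S : {set T}) (e : rel T) (D : nat) l x :
  (0 < D)%N -> (forall x, x \in S -> (D <= deg S e x)%N) -> (0 < l)%N ->
  V (phi S e l) (psi e) 0 l x = (x \in S)%:R * (deg S e x)%:R.
Proof.
move=> D0 hD; case: l => [|l] // _ /=; rewrite phi0; congr (_ * _).
rewrite -(sum_adj S e 0 x); apply: eq_bigr => y _; congr (_ * _).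
apply: (B1gen D0 hD (m := 0)) => //; lia.
Qed.

Close Scope ring_scope.
Open Scope ring_scope.
Lemma CF_Phia (T : finType) (S : {set T}) (e : rel T) (x0 a : T) l (s : l.+1.-tuple T) :
  (0 < l)%N ->
  CF x0 (Phia S e l a) (psi e) 0 s =
  (nth x0 s 0 == a)%:R * (nth x0 s l == a)%:R * CF x0 (phi S e l) (psi e) 0 s.
Proof.
move=> l0; rewrite /CF size_tuple /Phia big_split /= mulrA; congr (_ * _).
rewrite mulrC; congr (_ * _).
rewrite (prod_pick _ (ltn0Sn l)) eqxx /= (prod_pick _ (ltnSn l)) eqxx orbT.
have -> : (l == 0)%N = false by apply/negbTE; lia.
rewrite big1 ?mulr1 // => j _; case: ifP => // /negbT jl; case: ifP => // /negbT j0.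
by rewrite (negbTE j0) (negbTE jl).
Qed.

Lemma collision (T : finType) (S : {set T}) (e : rel T) (D : nat) (x0 : T) l :
  (0 < D)%N -> (forall x, x \in S -> (D <= deg S e x)%N) -> (1 < l)%N ->
  \sum_(s : l.+1.-tuple T) (nth x0 s 0 == nth x0 s l)%:R * CF x0 (phi S e l) (psi e) 0 s
  <= (D%:R)^-1 * Esum S e.
Proof.
move=> D0 hD l1.
have -> : \sum_(s : l.+1.-tuple T) (nth x0 s 0 == nth x0 s l)%:R * CF x0 (phi S e l) (psi e) 0 s
   = \sum_a \sum_(s : l.+1.-tuple T) CF x0 (Phia S e l a) (psi e) 0 s.
  rewrite exchange_big /=; apply: eq_bigr => s _.
  have l0 : (0 < l)%N by lia.
  rewrite (eq_bigr (fun a => (nth x0 s 0 == a)%:R * (nth x0 s l == a)%:R * CF x0 (phi S e l) (psi e) 0 s)); last first.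
    by move=> a _; rewrite CF_Phia.
  rewrite -mulr_suml; congr (_ * _).
  rewrite (bigD1 (nth x0 s 0)) //= big1 ?addr0; first by rewrite eqxx mul1r eq_sym.
  by move=> a /negbTE; rewrite eq_sym => ->; rewrite mul0r.
rewrite /Esum mulr_sumr; apply: ler_sum => a _; rewrite CF_total.
exact: B2total.
Qed.

Lemma CF0 (T : Type) (x0 : T) Phi Psi (s : seq T) :
  CF x0 Phi Psi 0 s = (\prod_(0 <= j < size s) Phi j (nth x0 s j)) *
  \prod_(0 <= j < (size s).-1) Psi j (nth x0 s j) (nth x0 s j.+1).
Proof. by []. Qed.

Lemma CF_Phii (T : finType) (S : {set T}) (e : rel T) (x0 : T) l (s : l.+1.-tuple T) (i : 'I_l.+1) :
  CF x0 (phi S e l) (psi e) 0 s != 0 ->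
  CF x0 (Phii S e l x0 i) (Psii e i) 0 (trep s i x0) = rst S e x0 i (trep s i x0).
Proof.
move=> /adjp_walk [He _]; rewrite CF0 size_tuple /=.
rewrite (prod_pick _ (ltn_ord i)) /Phii eqxx nth_trep !eqxx mul1r.
rewrite [X in _ * X]big_nat [X in _ * X]big1 ?mulr1.
  rewrite /rst; apply: eq_bigr => j _; case: ifP => // ->; done.
move=> j /andP [_ jl]; rewrite /Psii; case: ifP => // /negbT; rewrite negb_or => /andP [j1 j2].
rewrite !nth_trep (negbTE j2).
have -> : (j.+1 == i) = false by apply/negbTE; apply: contra j1 => /eqP <-.
by rewrite /psi He.
Qed.

Close Scope ring_scope.
Open Scope ring_scope.
Lemma CF_ge0g (T : Type) (x0 : T) Phi Psi o (s : seq T) :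
  (forall j x, 0 <= Phi j x) -> (forall j x y, 0 <= Psi j x y) -> 0 <= CF x0 Phi Psi o s.
Proof.
move=> H1 H2; rewrite /CF; apply: mulr_ge0; apply: prodr_ge0 => j _; [exact: H1 | exact: H2].
Qed.

Lemma main_tuple (T : finType) (S : {set T}) (e : rel T) (D : nat) (x0 : T) l (beta : nat) :
  (0 < D)%N -> (forall x, x \in S -> (D <= deg S e x)%N) -> (1 < l)%N ->
  (l.+1)%:R * (beta.-1)%:R * #|S|%:R * ((D%:R)^-1 * (D%:R)^-1) < 1 - (D%:R)^-1 :> rat ->
  0 < Esum S e ->
  exists Q : {set l.+1.-tuple T}, [/\ Q != set0, trich beta Q,
    forall s, s \in Q -> CF x0 (phi S e l) (psi e) 0 s != 0 &
    forall s, s \in Q -> tnth s ord0 != tnth s ord_max].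
Proof.
move=> D0 hD l1 hnum E0.
set c0 : rat := (D%:R)^-1.
have c00 : 0 <= c0 by rewrite invr_ge0 ler0n.
set Wk := [set s : l.+1.-tuple T | (CF x0 (phi S e l) (psi e) 0 s != 0) && (tnth s ord0 != tnth s ord_max)].
have [Q [sub ne rich]] : exists Q : {set l.+1.-tuple T}, [/\ Q \subset Wk, Q != set0 & trich beta Q].
  apply: (@deletion T l.+1 x0 beta c0 (@wt T S e x0 l) (@rst T S e x0 l)
            (fun i v => if inner i then phi S e l i v else 0) _ _ _ _ _ #|Wk| Wk erefl) => //.
  - move=> i v; case: ifP => // /andP [i1 i2].
    apply: le_trans (phi_int_le (l:=l) (j:=i) v D0 hD i1 i2) _.
    rewrite -[X in _ <= X]mulr1; apply: ler_wpM2l => //; by case: (v \in S).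
  - by move=> i s; exact: rst_ge0.
  - by move=> i s v ii; rewrite ii wt_trep.
  - by move=> i s v; exact: rst_trep.
  set CFs := fun s : l.+1.-tuple T => CF x0 (phi S e l) (psi e) 0 s.
  have muW : Esum S e - c0 * Esum S e <= mu (@wt T S e x0 l) Wk.
    have tot : \sum_s CFs s = Esum S e.
      rewrite /CFs CF_total /Esum; apply: eq_bigr => x _; apply: V_total D0 hD _; lia.
    have eqW : mu (@wt T S e x0 l) Wk = \sum_(s in Wk) CFs s.
      apply: eq_bigr => s; rewrite inE => /andP [H _].
      by rewrite /CFs CF_split (proj2 (adjp_walk H)) mulr1.
    have restW : \sum_(s in ~: Wk) CFs s <= \sum_(s : l.+1.-tuple T) (nth x0 s 0 == nth x0 s l)%:R * CFs s.
      apply: le_trans (_ : \sum_(s : l.+1.-tuple T | s \in ~: Wk) (nth x0 s 0 == nth x0 s l)%:R * CFs s <= _).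
        apply: ler_sum => s; rewrite /CFs !inE negb_and negbK => /orP [/eqP ->|H]; first by rewrite mulr0.
        have -> : nth x0 s 0 == nth x0 s l.
          by move: H; rewrite negbK (tnth_nth x0) (tnth_nth x0).
        by rewrite mul1r.
      rewrite [X in _ <= X](bigID (mem (~: Wk))) /= -[X in X <= _]addr0; apply: lerD.
        by apply: le_refl.
      apply: sumr_ge0 => s _; apply: mulr_ge0; [exact: ler0n | exact: CF_ge0].
    have coll := collision x0 D0 hD l1.
    have spl : \sum_s CFs s = \sum_(s in Wk) CFs s + \sum_(s in ~: Wk) CFs s.
      rewrite (bigID (mem Wk)) /=; congr (_ + _); apply: eq_bigl => s; by rewrite !inE.
    have hB := le_trans restW coll.
    rewrite eqW; move: tot spl hB; rewrite /c0.
    move: (\sum_s CFs s) (\sum_(s in Wk) CFs s) (\sum_(s in ~: Wk) CFs s) ((D%:R)^-1 * Esum S e) => a b c d.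
    move: (Esum S e) => E; lra.
  have BW : Bud x0 ((beta.-1)%:R * c0) (@rst T S e x0 l) Wk <=
            (l.+1)%:R * ((beta.-1)%:R * c0) * (c0 * #|S|%:R * Esum S e).
    have cB0 : 0 <= (beta.-1)%:R * c0 by apply: mulr_ge0 => //; exact: ler0n.
    rewrite /Bud; apply: le_trans (_ : \sum_(i : 'I_l.+1 | inner i) ((beta.-1)%:R * c0) * (c0 * #|S|%:R * Esum S e) <= _).
      apply: ler_sum => i /andP [i1 i2]; apply: ler_wpM2l => //.
      rewrite (eq_bigr (fun k : l.+1.-tuple T => CF x0 (Phii S e l x0 i) (Psii e i) 0 k)); last first.
        move=> k /imsetP [s]; rewrite inE => /andP [H _] ->; by rewrite CF_Phii.
      apply: le_trans (_ : \sum_(k : l.+1.-tuple T) CF x0 (Phii S e l x0 i) (Psii e i) 0 k <= _).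
        rewrite [X in _ <= X](bigID (mem [set trep s i x0 | s in Wk])) /= -[X in X <= _]addr0.
        apply: lerD; first exact: le_refl.
        apply: sumr_ge0 => k _; apply: CF_ge0g; [exact: Phii_ge0 | exact: Psii_ge0].
      by rewrite CF_total; apply: B3total.
    rewrite big_mkcond /=; apply: le_trans (_ : \sum_(i : 'I_l.+1) ((beta.-1)%:R * c0) * (c0 * #|S|%:R * Esum S e) <= _).
      apply: ler_sum => i _; case: ifP => // _; apply: mulr_ge0 => //.
      apply: mulr_ge0; last exact: ltW.
      by apply: mulr_ge0 => //; exact: ler0n.
    by rewrite sumr_const card_ord -[_ *+ l.+1]mulr_natl mulrA.
  apply: lt_le_trans muW; apply: le_lt_trans BW _.
  have := ltr_pM2r E0; move=> H; move: hnum; rewrite -H => hnum.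
  rewrite -/c0 in hnum; move: hnum; nra.
exists Q; split => // s sQ; have := subsetP sub s sQ; rewrite inE => /andP [].
  by [].
by move=> _.
Qed.

Close Scope ring_scope.
Definition others (T : finType) k (s : k.-tuple T) (i : 'I_k) : {set T} :=
  (tnth s) @: [set~ i].

Lemma others_card (T : finType) k (s : k.-tuple T) i : #|others s i| <= k.-1.
Proof. by apply: leq_trans (leq_imset_card _ _) _; rewrite cardsC1 card_ord. Qed.

Lemma others_trep (T : finType) k (s : k.-tuple T) i v : others (trep s i v) i = others s i.
Proof.
apply: eq_in_imset => j; rewrite !inE => ji; by rewrite tnth_trep (negbTE ji).
Qed.

Lemma vals_split (T : finType) k (s : k.-tuple T) i :
  (tnth s) @: setT = tnth s i |: others s i.
Proof.
have -> : [set: 'I_k] = i |: [set~ i] by apply/setP => j; rewrite !inE; case: eqP.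
by rewrite imsetU1.
Qed.

Lemma uniq_trep (T : finType) k (s : k.-tuple T) i v :
  uniq s -> v \notin others s i -> uniq (trep s i v).
Proof.
move=> /tuple_uniqP inj vO; apply/tuple_uniqP => j1 j2; rewrite !tnth_trep.
have oth : forall j, j != i -> tnth s j \in others s i.
  by move=> j ji; apply: imset_f; rewrite !inE.
case: eqP => [->|/eqP j1i]; case: eqP => [->//|/eqP j2i].
- by move=> E; move: vO; rewrite E oth.
- by move=> E; move: vO; rewrite -E oth.
- exact: inj.
Qed.

Lemma rich_uniq (T : finType) k (beta : nat) (Q : {set k.-tuple T}) :
  trich beta Q -> trich (beta - k.-1) [set s in Q | uniq s].
Proof.
move=> rich s; rewrite inE => /andP [sQ us] i ii.
apply: leq_trans (_ : #|[set v | trep s i v \in Q] :\: others s i| <= _).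
  rewrite cardsD; have := rich s sQ i ii; have := others_card s i.
  have : #|[set v | trep s i v \in Q] :&: others s i| <= #|others s i| by apply: subset_leq_card; apply: subsetIr.
  lia.
apply: subset_leq_card; apply/subsetP => v; rewrite !inE => /andP [vO vQ].
by rewrite vQ uniq_trep.
Qed.

Lemma exists_uniq (T : finType) l (beta : nat) (Q : {set l.+1.-tuple T}) :
  (0 < l)%N -> (l < beta)%N -> trich beta Q ->
  (forall s, s \in Q -> tnth s ord0 != tnth s ord_max) ->
  forall s, s \in Q -> exists2 s', s' \in Q & uniq s'.
Proof.
move=> l0 lb rich hQ.
suff H : forall n s, s \in Q -> (l.+1 - #|(tnth s) @: setT| = n)%N -> exists2 s', s' \in Q & uniq s'.
  by move=> s sQ; exact: H _ s sQ erefl.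
elim/ltn_ind => n IH s sQ hn.
case: (boolP (uniq s)) => [us|nus]; first by exists s.
have [j1 [j2 [j12 e12]]] : exists j1 j2 : 'I_l.+1, j1 != j2 /\ tnth s j1 = tnth s j2.
  case: (boolP [exists j1, exists j2, (j1 != j2) && (tnth s j1 == tnth s j2)]).
    by move=> /existsP [j1 /existsP [j2 /andP [H /eqP E]]]; exists j1, j2.
  move=> H; exfalso; move/negP: nus; apply; apply/tuple_uniqP => j1 j2 E.
  apply/eqP; apply: contraNT H => H; apply/existsP; exists j1; apply/existsP; exists j2.
  by rewrite H E eqxx.
have [i [j [ii ij eij]]] : exists i j : 'I_l.+1, [/\ inner i, i != j & tnth s i = tnth s j].
  case: (boolP (inner j1)) => i1; first by exists j1, j2.
  case: (boolP (inner j2)) => i2; first by exists j2, j1; rewrite eq_sym.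
  exfalso; move: i1 i2; rewrite /inner => i1 i2.
  have H0 : forall j : 'I_l.+1, ~~ ((1 <= j)%N && (j.+2 <= l.+1)%N) -> j = ord0 \/ j = ord_max.
    move=> j Hj; case: (boolP (j == ord0)) => [/eqP->|/eqP H]; first by left.
    right; apply/val_inj => /=.
    have h0 : nat_of_ord j != 0%N by apply/eqP => H'; apply: H; apply/val_inj.
    move: Hj h0; have := ltn_ord j; move: (nat_of_ord j) => m; lia.
  have := hQ s sQ.
  case: (H0 _ i1) => E1; case: (H0 _ i2) => E2; move: j12 e12; rewrite E1 E2 ?eqxx //.
  - by move=> _ ->; rewrite eqxx.
  - by move=> _ ->; rewrite eqxx.
have : (#|others s i| < #|[set v | trep s i v \in Q]|)%N.
  have := others_card s i; have := rich s sQ i ii; lia.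
move=> Hc.
have [v vV vO] : exists2 v, v \in [set v | trep s i v \in Q] & v \notin others s i.
  apply/subsetPn; apply: contraTN Hc => Hsub; rewrite -leqNgt; exact: subset_leq_card.
rewrite inE in vV.
have jO : tnth s i \in others s i by rewrite eij; apply: imset_f; rewrite !inE eq_sym.
have c1 : #|(tnth s) @: setT| = #|others s i| by rewrite (vals_split s i) cardsU1 jO.
have c2 : #|(tnth (trep s i v)) @: setT| = #|others s i|.+1.
  by rewrite (vals_split _ i) others_trep tnth_trep eqxx cardsU1 vO.
have oc := others_card s i.
apply: (IH _ _ (trep s i v) vV erefl).
rewrite c2 -hn c1; simpl in oc; lia.
Qed.

Close Scope ring_scope.
Definition degn (T : finType) (e : rel T) (S : {set T}) (y : T) : nat := \sum_(z in S) e y z.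
Definition En (T : finType) (e : rel T) (S : {set T}) : nat := \sum_(y in S) degn e S y.

Lemma deg_degn (T : finType) (S : {set T}) (e : rel T) y : deg S e y = degn e S y.
Proof.
rewrite /deg /degn -sum1_card big_mkcond [RHS]big_mkcond /=; apply: eq_bigr => z _.
by rewrite inE; case: (z \in S); case: (e y z).
Qed.

Lemma degn_remove (T : finType) (e : rel T) (S : {set T}) x y :
  x \in S -> degn e S y = e y x + degn e (S :\ x) y.
Proof.
move=> xS; rewrite /degn (bigD1 x) //=; congr (_ + _).
by apply: eq_bigl => z; rewrite !inE andbC.
Qed.

Lemma En_remove (T : finType) (e : rel T) (S : {set T}) x :
  symmetric e -> irreflexive e -> x \in S -> En e S = En e (S :\ x) + 2 * degn e S x.
Proof.
move=> sym irr xS; rewrite /En (bigD1 x) //=.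
have -> : \sum_(y in S | y != x) degn e S y = \sum_(y in S :\ x) e x y + \sum_(y in S :\ x) degn e (S :\ x) y.
  rewrite -big_split /=; apply: eq_big => [y|y]; first by rewrite !inE andbC.
  by move=> _; rewrite (degn_remove _ _ xS) sym.
have -> : \sum_(y in S :\ x) e x y = degn e S x.
  rewrite /degn [RHS](bigD1 x) //= irr add0n; apply: eq_bigl => z; by rewrite !inE andbC.
lia.
Qed.

Lemma core (T : finType) (e : rel T) (D : nat) :
  symmetric e -> irreflexive e -> (0 < D)%N -> (2 * D * #|T| <= En e setT)%N -> (0 < #|T|)%N ->
  exists S : {set T}, S != set0 /\ forall x, x \in S -> (D <= deg S e x)%N.
Proof.
move=> sym irr D0 hE n0.
pose g (A : {set T}) := (En e A + (2 * D - 1) * (#|T| - #|A|))%N.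
case: (@arg_maxnP _ setT xpredT g erefl) => S _ Smax.
exists S; split.
  apply/set0Pn; case: (set_0Vmem S) => [S0|[x xS]]; last by exists x.
  have H : (g setT <= g S)%N := Smax setT erefl.
  move: H; rewrite /g S0 cards0 cardsT subn0 subnn muln0 addn0.
  have -> : En e set0 = 0%N by rewrite /En big_set0.
  rewrite add0n; move: hE; nia.
move=> x xS; rewrite deg_degn leqNgt; apply/negP => small.
have H : (g (S :\ x) <= g S)%N := Smax (S :\ x) erefl.
move: H; rewrite /g (En_remove sym irr xS).
have c1 := cardsD1 x S; rewrite xS in c1.
have cS : (#|S| <= #|T|)%N by apply: max_card.
move: c1 cS small; move: (En e (S :\ x)) (degn e S x) #|S :\ x| #|S| #|T| => a b c d n.
nia.
Qed.

Lemma En_setT (T : finType) (e : rel T) : En e setT = #|[set p : T * T | e p.1 p.2]|.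
Proof.
rewrite /En /degn.
rewrite (eq_bigr (fun y => \sum_z (e y z : nat))); last by move=> y _; apply: eq_bigl => z; rewrite in_setT.
rewrite (eq_bigl xpredT); last by move=> y; rewrite in_setT.
rewrite pair_bigA /= -sum1_card [RHS]big_mkcond /=; apply: eq_bigr => p _; rewrite inE.
by case: (e p.1 p.2).
Qed.

Close Scope ring_scope.
Lemma numeric_nat (t n m D : nat) :
  (2 <= t)%N -> (0 < n)%N -> (25 * t ^ 3 * n ^ 3 <= m ^ 2)%N -> (D * n <= m)%N -> (m < D.+1 * n)%N ->
  (((2 * t - 1) * (t ^ 2 + 2 * t - 2)) * n + D < D * D)%N /\ (0 < D)%N.
Proof.
move=> t2 n0 hm h1 h2.
have h3 : (m ^ 2 < (D.+1 * n) ^ 2)%N by rewrite ltn_sqr.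
have h4 : (25 * t ^ 3 * n * (n * n) < D.+1 ^ 2 * (n * n))%N.
  move: hm h3; rewrite ?expnS ?expn0 ?muln1; nia.
rewrite ltn_pmul2r ?muln_gt0 ?n0 // in h4.
have h5 : ((2 * t - 1) * (t ^ 2 + 2 * t - 2) <= 5 * t ^ 3)%N.
  rewrite ?expnS ?expn0 ?muln1; nia.
set P := (t ^ 3 * n)%N in h4.
have P1 : (1 <= P)%N by rewrite /P muln_gt0 expn_gt0; lia.
have h6 : ((2 * t - 1) * (t ^ 2 + 2 * t - 2) * n <= 5 * P)%N.
  by rewrite /P mulnA leq_mul2r h5 orbT.
move: h4; rewrite ?expnS ?expn0 ?muln1 => h4.
split; nia.
Qed.

Open Scope ring_scope.

Lemma numeric_rat (A D : nat) : (A + D < D * D)%N -> (0 < D)%N ->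
  A%:R * ((D%:R)^-1 * (D%:R)^-1) < 1 - (D%:R)^-1 :> rat.
Proof.
move=> h D0.
have Dp : (0 < D%:R :> rat) by rewrite ltr0n.
have hA : (A%:R < D%:R * D%:R - D%:R :> rat).
  rewrite -natrM ltrBrDr -natrD ltr_nat; lia.
have -> : 1 - (D%:R)^-1 = (D%:R * D%:R - D%:R) * ((D%:R)^-1 * (D%:R)^-1) :> rat.
  by field; rewrite lt0r_neq0.
rewrite ltr_pM2r // mulr_gt0 // invr_gt0 //.
Qed.

Definition tau (T : finType) k (s : k.-tuple T) : {ffun 'I_k -> T} := [ffun j => tnth s j].

Lemma tau_inj (T : finType) k : injective (@tau T k).
Proof. move=> s1 s2 H; apply: eq_from_tnth => j; by have := congr1 (fun f : {ffun 'I_k -> T} => f j) H; rewrite !ffunE. Qed.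

Lemma tau_rep (T : finType) k (s : k.-tuple T) i v : replace_at (tau s) i v = tau (trep s i v).
Proof. by apply/ffunP => j; rewrite !ffunE tnth_trep. Qed.

Lemma final_step (T : finType) (S : {set T}) (e : rel T) (x0 : T) l (beta alpha : nat)
  (Q : {set l.+1.-tuple T}) :
  (0 < l)%N -> (l < beta)%N -> (alpha + l <= beta)%N ->
  Q != set0 -> trich beta Q ->
  (forall s, s \in Q -> CF x0 (phi S e l) (psi e) 0 s != 0) ->
  (forall s, s \in Q -> tnth s ord0 != tnth s ord_max) ->
  exists P : {set {ffun 'I_l.+1 -> T}},
    P != set0 /\ (forall p, p \in P -> is_gpath e p) /\ rich alpha P.
Proof.
move=> l0 lb ab ne rich hCF hQ.
set Qi := [set s in Q | uniq s].
exists [set tau s | s in Qi]; split; [|split].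
- case/set0Pn: ne => s sQ; have [s' s'Q us'] := exists_uniq l0 lb rich hQ sQ.
  apply/set0Pn; exists (tau s'); apply: imset_f; by rewrite inE s'Q.
- move=> p /imsetP [s]; rewrite inE => /andP [sQ us] ->.
  apply/andP; split.
    apply/injectiveP => i j; rewrite !ffunE; exact: (tuple_uniqP _ us).
  apply/forallP => i; apply/forallP => j; apply/implyP => /eqP ji; rewrite !ffunE.
  have [He _] := adjp_walk (hCF s sQ).
  rewrite !(tnth_nth x0) ji; apply: He; have := ltn_ord j; lia.
- move=> p /imsetP [s]; rewrite inE => /andP [sQ us] -> i i1 i2.
  have ii : inner i by rewrite /inner i1 i2.
  have := rich_uniq rich (s := s); rewrite inE sQ us => /(_ erefl i ii) H.
  apply: leq_trans (leq_trans _ H) _; first lia.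
  apply: subset_leq_card; apply/subsetP => v; rewrite !inE tau_rep.
  by move=> Hv; apply: imset_f; rewrite inE.
Qed.

Close Scope ring_scope.
Lemma Esum_pos (T : finType) (S : {set T}) (e : rel T) (D : nat) :
  (0 < D)%N -> (forall x, x \in S -> (D <= deg S e x)%N) -> S != set0 -> (0 < Esum S e)%R.
Proof.
move=> D0 hD /set0Pn [y yS]; rewrite /Esum (bigD1 y) //= yS mul1r.
have h1 : (0 < (deg S e y)%:R :> rat)%R by rewrite ltr0n (leq_trans D0 (hD y yS)).
have h2 : (0 <= \sum_(i | i != y) (i \in S)%:R * (deg S e i)%:R :> rat)%R.
  by apply: sumr_ge0 => i _; apply: mulr_ge0; exact: ler0n.
lra.
Qed.

Theorem lemma3p6 (t : nat) : 0 < t ->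
  exists N : nat, forall (T : finType) (e : rel T),
    symmetric e -> irreflexive e -> N <= #|T| ->
    (* e(G) >= 5 t^{3/2} n^{3/2}, squared (both sides nonnegative) *)
    25 * t ^ 3 * #|T| ^ 3 <= (num_edges e) ^ 2 ->
    exists P : {set {ffun 'I_(2 * t - 1) -> T}},
      P != set0 /\ (forall p, p \in P -> is_gpath e p) /\ rich (t ^ 2) P.
Proof.
move=> t0; exists 1 => T e sym irr n1 hm.
have [x _] : exists x : T, x \in T by apply/card_gt0P.
case: (ltnP t 2) => [t1|t2].
  have t1' : t = 1 by lia.
  subst t.
  exists [set [ffun _ => x]]; split; [|split].
  - by apply/set0Pn; exists [ffun _ => x]; rewrite inE.
  - move=> p; rewrite inE => /eqP ->; apply/andP; split.
      apply/injectiveP => i j _; apply: val_inj; have := ltn_ord i; have := ltn_ord j; simpl; lia.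
    apply/forallP => i; apply/forallP => j; apply/implyP => /eqP ji; have := ltn_ord j; simpl; lia.
  - move=> p _ i i1 i2; have := ltn_ord i; simpl in *; lia.
set l := (2 * t - 2).
have -> : (2 * t - 1 = l.+1) by rewrite /l; lia.
set m := num_edges e; set n := #|T|.
have n0 : 0 < n by [].
set D := m %/ n.
have [hnum D0] := numeric_nat t2 n0 hm (leq_trunc_div m n) (ltn_ceil m n0).
have hE : 2 * D * n <= En e setT.
  rewrite En_setT; have := leq_trunc_div #|[set p : T * T | e p.1 p.2]| 2.
  have := leq_trunc_div m n; rewrite -/D /m /num_edges.
  move: (#|[set p : T * T | e p.1 p.2]| %/ 2) => c; lia.
have [S [Sne hD]] := core sym irr D0 hE n0.
have E0 := Esum_pos D0 hD Sne.
have SN : #|S| <= n := max_card S.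
have l1 : 1 < l by rewrite /l; lia.
set beta := (t ^ 2 + l.+1).
have num : ((l.+1)%:R * (beta.-1)%:R * #|S|%:R * ((D%:R)^-1 * (D%:R)^-1) < 1 - (D%:R)^-1 :> rat)%R.
  rewrite -!natrM; apply: numeric_rat D0.
  have e1 : l.+1 = 2 * t - 1 by rewrite /l; lia.
  have e2 : beta.-1 = t ^ 2 + 2 * t - 2 by rewrite /beta /l; lia.
  rewrite e1 e2; apply: leq_ltn_trans hnum; rewrite leq_add2r leq_mul2l SN orbT //.
have [Q [Qne Qr QCF Qh]] := main_tuple x D0 hD l1 num E0.
apply: (final_step (alpha := t ^ 2)) Qne Qr QCF Qh; rewrite /beta /l; lia.
Qed.

Close Scope ring_scope.
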